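(* For every quantifier-free $\tau_0$-formula $\varphi$ and every variable $x$ there exists a quantifier-free $\tau_0$-formula $\psi$ such that $\exists x.\,\varphi$ is equivalent to $\psi$ over $\mathfrak{L}$.
   Context: $\mathfrak{L}$ is the structure with domain $\mathbb{Q}$ and signature $\tau_0=\{<,1\}\cup\{c\cdot\}_{c\in\mathbb{Q}}$, where $<$ is the usual strict order on $\mathbb{Q}$, $1$ is a constant symbol denoting $1$, and each $c\cdot$ is a unary function symbol denoting $x\mapsto cx$. *)

(* Defs.v *)
(* the structure L = (Q, <, 1, (c.)_{c in Q}) over mathcomp's rat. *)
From mathcomp Require Import all_boot all_order all_algebra.
Set Implicit Arguments. Unset Strict Implicit. Unset Printing Implicit Defensive.
Import Order.TTheory GRing.Theory Num.Theory.
Local Open Scope ring_scope.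

Inductive term : Type :=
| TVar : nat -> term
| TOne : term
| TScale : rat -> term -> term.

Inductive formula : Type :=
| FEq : term -> term -> formula
| FLt : term -> term -> formula
| FTrue : formula
| FFalse : formula
| FNot : formula -> formula
| FAnd : formula -> formula -> formula
| FOr : formula -> formula -> formula
| FImp : formula -> formula -> formula
| FEx : nat -> formula -> formula
| FAll : nat -> formula -> formula.

Fixpoint qf (f : formula) : bool :=
  match f with
  | FEq _ _ | FLt _ _ | FTrue | FFalse => true
  | FNot g => qf g
  | FAnd g h | FOr g h | FImp g h => qf g && qf h
  | FEx _ _ | FAll _ _ => false
  end.

Fixpoint teval (v : nat -> rat) (t : term) : rat :=
  match t with
  | TVar n => v n
  | TOne => 1
  | TScale c s => c * teval v s
  end.

Definition upd (v : nat -> rat) (x : nat) (a : rat) : nat -> rat :=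
  fun n => if n == x then a else v n.

Fixpoint holds (v : nat -> rat) (f : formula) : Prop :=
  match f with
  | FEq s t => teval v s = teval v t
  | FLt s t => teval v s < teval v t
  | FTrue => True
  | FFalse => False
  | FNot g => ~ holds v g
  | FAnd g h => holds v g /\ holds v h
  | FOr g h => holds v g \/ holds v h
  | FImp g h => holds v g -> holds v h
  | FEx x g => exists a : rat, holds (upd v x a) g
  | FAll x g => forall a : rat, holds (upd v x a) g
  end.

Fixpoint tvars (t : term) : seq nat :=
  match t with
  | TVar n => [:: n]
  | TOne => [::]
  | TScale _ s => tvars s
  end.

Fixpoint fv (f : formula) : seq nat :=
  match f with
  | FEq s t | FLt s t => tvars s ++ tvars t
  | FTrue | FFalse => [::]
  | FNot g => fv g
  | FAnd g h | FOr g h | FImp g h => fv g ++ fv h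
  | FEx x g | FAll x g => filter (fun n => n != x) (fv g)
  end.

(* Main.v *)
Require Import Defs.
From mathcomp Require Import all_boot all_order all_algebra.
Import Order.TTheory GRing.Theory Num.Theory.
Local Open Scope ring_scope.

Fixpoint tbase (t : term) : option nat :=
  match t with TVar n => Some n | TOne => None | TScale _ s => tbase s end.
Fixpoint tcoef (t : term) : rat :=
  match t with TVar _ => 1 | TOne => 1 | TScale c s => c * tcoef s end.
Definition bval (v : nat -> rat) (o : option nat) : rat :=
  match o with Some n => v n | None => 1 end.

Lemma teval_base v t : teval v t = tcoef t * bval v (tbase t).
Proof. elim: t => [n|| c s IH] /=; rewrite ?mul1r //. by rewrite IH mulrA. Qed.

Lemma tvars_base t : tvars t = if tbase t is Some n then [:: n] else [::].
Proof. by elim: t. Qed.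

Lemma teval_upd_free v x y t : x \notin tvars t -> teval (upd v x y) t = teval v t.
Proof.
elim: t => [n||c s IH] //=; last by move=> h; rewrite IH.
by rewrite inE /upd => h; rewrite eq_sym (negbTE h).
Qed.

Definition hasx x t := tbase t == Some x.

Definition lin x s t : option (rat * term) :=
  if hasx x s then (if hasx x t then Some (tcoef s - tcoef t, TScale 0 TOne)
                    else Some (tcoef s, t))
  else if hasx x t then Some (- tcoef t, TScale (-1) s) else None.

Lemma notx_free x t : ~~ hasx x t -> x \notin tvars t.
Proof.
rewrite /hasx tvars_base; case: (tbase t) => [n|] //=.
by rewrite inE => h; apply: contra h => /eqP ->.
Qed.

Lemma hasx_eval v x y t : hasx x t -> teval (upd v x y) t = tcoef t * y.
Proof. by rewrite /hasx teval_base => /eqP -> /=; rewrite /upd eqxx. Qed.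

Lemma lin_some v x s t a r y : lin x s t = Some (a, r) ->
  [/\ (teval (upd v x y) s = teval (upd v x y) t <-> a * y = teval v r),
      (teval (upd v x y) s < teval (upd v x y) t <-> a * y < teval v r),
      x \notin tvars r &
      {subset tvars r <= tvars s ++ tvars t}].
Proof.
rewrite /lin; case hs: (hasx x s); case ht: (hasx x t) => //= -[<- <-].
- rewrite !(hasx_eval v x y s hs) !(hasx_eval v x y t ht) /= mulr1.
  split => //.
  + rewrite mulrBl; split => [->|/eqP]; first by rewrite subrr.
    by rewrite subr_eq0 => /eqP.
  + by rewrite mulrBl subr_lt0.
- rewrite (hasx_eval v x y s hs) teval_upd_free ?notx_free ?ht //.
  split => //.
  by move=> n; rewrite mem_cat => ->; rewrite orbT.
- rewrite (hasx_eval v x y t ht) teval_upd_free ?notx_free ?hs // /=.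
  have -> : -1 * teval v s = - teval v s by rewrite mulN1r.
  rewrite mulNr; split => //.
  + by split => [->//|/oppr_inj].
  + by rewrite ltrN2.
  + by move=> n; rewrite mem_cat => ->.
  + exact: negbT hs.
Qed.

Lemma lin_none v x s t y : lin x s t = None ->
  teval (upd v x y) s = teval v s /\ teval (upd v x y) t = teval v t.
Proof.
rewrite /lin; case hs: (hasx x s); case ht: (hasx x t) => //= _.
by rewrite !teval_upd_free ?notx_free ?hs ?ht.
Qed.

Lemma lin_none_vars x s t : lin x s t = None -> x \notin tvars s ++ tvars t.
Proof.
rewrite /lin; case hs: (hasx x s); case ht: (hasx x t) => //= _.
by rewrite mem_cat negb_or !notx_free ?hs ?ht.
Qed.
From mathcomp Require Import lra.

Fixpoint mapat (fa fl : term -> term -> formula) (f : formula) : formula :=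
  match f with
  | FEq s t => fa s t
  | FLt s t => fl s t
  | FTrue => FTrue
  | FFalse => FFalse
  | FNot g => FNot (mapat fa fl g)
  | FAnd g h => FAnd (mapat fa fl g) (mapat fa fl h)
  | FOr g h => FOr (mapat fa fl g) (mapat fa fl h)
  | FImp g h => FImp (mapat fa fl g) (mapat fa fl h)
  | FEx _ _ => FFalse
  | FAll _ _ => FFalse
  end.

Definition bpts_at x s t : seq term :=
  match lin x s t with
  | Some (a, r) => if a == 0 then [::] else [:: TScale a^-1 r]
  | None => [::]
  end.

Fixpoint bpts x (f : formula) : seq term :=
  match f with
  | FEq s t | FLt s t => bpts_at x s t
  | FNot g => bpts x g
  | FAnd g h | FOr g h | FImp g h => bpts x g ++ bpts x h
  | _ => [::]
  end.

Lemma mapat_holds fa fl v w (c : pred term) x f : qf f -> all c (bpts x f) ->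
  (forall s t, all c (bpts_at x s t) ->
     (holds v (fa s t) <-> holds w (FEq s t)) /\ (holds v (fl s t) <-> holds w (FLt s t))) ->
  (holds v (mapat fa fl f) <-> holds w f).
Proof.
move=> + + H; elim: f => //=.
- by move=> s t _ hc; case: (H s t hc).
- by move=> s t _ hc; case: (H s t hc).
- by move=> g IH hq hc; have := IH hq hc; tauto.
- move=> g IHg h IHh /andP[qg qh]; rewrite all_cat => /andP[cg ch].
  by have := IHg qg cg; have := IHh qh ch; tauto.
- move=> g IHg h IHh /andP[qg qh]; rewrite all_cat => /andP[cg ch].
  by have := IHg qg cg; have := IHh qh ch; tauto.
- move=> g IHg h IHh /andP[qg qh]; rewrite all_cat => /andP[cg ch].
  by have := IHg qg cg; have := IHh qh ch; tauto.
Qed.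

Lemma mapat_qf fa fl f : (forall s t, qf (fa s t) && qf (fl s t)) -> qf (mapat fa fl f).
Proof.
move=> H; elim: f => //=; try by move=> s t; case/andP: (H s t).
- by move=> g -> h ->.
- by move=> g -> h ->.
- by move=> g -> h ->.
Qed.

Section FV.
Variables (x : nat) (S : seq nat).
Definition Pv (l : seq nat) := all (fun n => (n != x) ==> (n \in S)) l.

Lemma mapat_fv fa fl f :
  (forall s t, Pv (tvars s ++ tvars t) ->
     all (mem S) (fv (fa s t)) && all (mem S) (fv (fl s t))) ->
  Pv (fv f) -> all (mem S) (fv (mapat fa fl f)).
Proof.
move=> H; elim: f => //=; try by move=> s t /H /andP[].
- by move=> g IHg h IHh; rewrite /Pv all_cat all_cat => /andP[/IHg -> /IHh ->].
- by move=> g IHg h IHh; rewrite /Pv all_cat all_cat => /andP[/IHg -> /IHh ->].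
- by move=> g IHg h IHh; rewrite /Pv all_cat all_cat => /andP[/IHg -> /IHh ->].
Qed.

Lemma free_sub r l : x \notin tvars r -> {subset tvars r <= l} -> Pv l -> all (mem S) (tvars r).
Proof.
move=> hx hs /allP hp; apply/allP => n hn.
have := hp n (hs n hn); have -> : n != x by apply: contraNneq hx => <-.
by [].
Qed.

Lemma bpts_fv f : Pv (fv f) ->
  all (fun p => (x \notin tvars p) && all (mem S) (tvars p)) (bpts x f).
Proof.
elim: f => //=.
- move=> s t hp; rewrite /bpts_at; case E: lin => [[a r]|] //; case: ifP => //= _.
  have [_ _ hx hs] := lin_some (fun _ => 0) x s t a r 0 E.
  by rewrite hx (free_sub _ _ hx hs hp).
- move=> s t hp; rewrite /bpts_at; case E: lin => [[a r]|] //; case: ifP => //= _.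
  have [_ _ hx hs] := lin_some (fun _ => 0) x s t a r 0 E.
  by rewrite hx (free_sub _ _ hx hs hp).
- by move=> g IHg h IHh; rewrite /Pv all_cat all_cat => /andP[/IHg -> /IHh ->].
- by move=> g IHg h IHh; rewrite /Pv all_cat all_cat => /andP[/IHg -> /IHh ->].
- by move=> g IHg h IHh; rewrite /Pv all_cat all_cat => /andP[/IHg -> /IHh ->].
Qed.
End FV.

Definition pt_eq x u s t :=
  match lin x s t with Some (a, r) => FEq (TScale a u) r | None => FEq s t end.
Definition pt_lt x u s t :=
  match lin x s t with Some (a, r) => FLt (TScale a u) r | None => FLt s t end.
Definition pl_eq x u s t :=
  match lin x s t with
  | Some (a, r) => if a == 0 then FEq (TScale a u) r else FFalse
  | None => FEq s t end.
Definition pl_lt x u s t :=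
  match lin x s t with
  | Some (a, r) => if a < 0 then FOr (FLt (TScale a u) r) (FEq (TScale a u) r)
                   else FLt (TScale a u) r
  | None => FLt s t end.
Definition mi_eq x s t :=
  match lin x s t with
  | Some (a, r) => if a == 0 then FEq (TScale 0 TOne) r else FFalse
  | None => FEq s t end.
Definition mi_lt x s t :=
  match lin x s t with
  | Some (a, r) => if a == 0 then FLt (TScale 0 TOne) r
                   else if 0 < a then FTrue else FFalse
  | None => FLt s t end.

Lemma Rsplit (a R : rat) : a != 0 -> R = a * (a^-1 * R).
Proof. by move=> h; rewrite mulrA divff // mul1r. Qed.

Lemma pt_ok v x u s t : x \notin tvars u ->
  (holds v (pt_eq x u s t) <-> holds (upd v x (teval v u)) (FEq s t)) /\
  (holds v (pt_lt x u s t) <-> holds (upd v x (teval v u)) (FLt s t)).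
Proof.
move=> hu; rewrite /pt_eq /pt_lt; case E: lin => [[a r]|].
- by have [h1 h2 _ _] := lin_some v x s t a r (teval v u) E; rewrite /= h1 h2.
- by have [h1 h2] := lin_none v x s t (teval v u) E; rewrite /= h1 h2.
Qed.

Lemma pl_ok v x u s t y : teval v u < y ->
  all (fun q => (teval v q <= teval v u) || (y < teval v q)) (bpts_at x s t) ->
  (holds v (pl_eq x u s t) <-> holds (upd v x y) (FEq s t)) /\
  (holds v (pl_lt x u s t) <-> holds (upd v x y) (FLt s t)).
Proof.
rewrite /pl_eq /pl_lt /bpts_at; move=> hby; case E: lin => [[a r]|]; last first.
  by have [h1 h2] := lin_none v x s t y E; rewrite /= h1 h2.
have [h1 h2 _ _] := lin_some v x s t a r y E; rewrite /= h1 h2.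
have [->|a0] := eqVneq a 0.
  by rewrite ltxx /= !mul0r.
rewrite /= andbT.
move=> /orP.
set c := a^-1 * teval v r => hc.
have eR : teval v r = a * c by rewrite /c mulrA divff // mul1r.
rewrite eR; clearbody c.
split.
  split => // /(mulfI a0) yc; case: hc => h; lra.
case: ltP => [aneg|apos].
  rewrite /= eR !ltr_nM2l //; split.
  - case=> [h|h]; first by case: hc => h1'; lra.
    have := mulfI a0 h => {}h; case: hc => h1'; lra.
  - move=> h; case: hc => h'; first (have [e|l] := eqVneq (teval v u) c).
    + by right => /=; rewrite e.
    + by left; move: l; rewrite neq_lt; case/orP => ?; lra.
    + lra.
have ap : 0 < a by rewrite lt_def a0 apos.
by rewrite /= eR !ltr_pM2l //; split => h; case: hc => h1'; lra.
Qed.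

Lemma mi_ok v x s t y :
  all (fun q => y < teval v q) (bpts_at x s t) ->
  (holds v (mi_eq x s t) <-> holds (upd v x y) (FEq s t)) /\
  (holds v (mi_lt x s t) <-> holds (upd v x y) (FLt s t)).
Proof.
rewrite /mi_eq /mi_lt /bpts_at; case E: lin => [[a r]|]; last first.
  by have [h1 h2] := lin_none v x s t y E; rewrite /= h1 h2.
have [h1 h2 _ _] := lin_some v x s t a r y E; rewrite /= h1 h2.
have [->|a0] := eqVneq a 0.
  by rewrite /= !mul0r.
rewrite /= andbT.
set c := a^-1 * teval v r => hc.
have eR : teval v r = a * c by rewrite /c mulrA divff // mul1r.
rewrite eR; clearbody c.
split.
  by split => // /(mulfI a0) yc; rewrite yc ltxx in hc.
case: ltP => [apos|aneg].
  by rewrite /= !ltr_pM2l //.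
have an : a < 0 by rewrite lt_neqAle a0 aneg.
by rewrite /= !ltr_nM2l //; split => // h; move: (lt_trans h hc); rewrite ltxx.
Qed.

Lemma ex_below v (l : seq term) : exists y, all (fun p => y < teval v p) l.
Proof.
elim: l => [|p l [y' hy']]; first by exists 0.
case: (ltP y' (teval v p)) => h.
  by exists y'; rewrite /= h hy'.
exists (teval v p - 1); rewrite /=; apply/andP; split; first lra.
by apply: sub_all hy' => q /= hq; lra.
Qed.

Lemma ex_above v b (l : seq term) :
  exists y, b < y /\ all (fun p => (teval v p <= b) || (y < teval v p)) l.
Proof.
elim: l => [|p l [y' [hb hy']]]; first by exists (b + 1); split => //; lra.
case: (leP (teval v p) b) => hp.
  by exists y'; rewrite /= hp hy'.
case: (ltP y' (teval v p)) => h.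
  by exists y'; rewrite /= h orbT hy'.
exists ((b + teval v p) / 2); split; first lra.
rewrite /=; apply/andP; split; first by apply/orP; right; lra.
apply: sub_all hy' => q /= /orP[->//|hq]; apply/orP; right; lra.
Qed.

Lemma ex_max v y (l : seq term) :
  all (fun p => y < teval v p) l \/
  exists p, List.In p l /\ teval v p <= y /\
     all (fun q => (teval v q <= teval v p) || (y < teval v q)) l.
Proof.
elim: l => [|p l [hall|[p' [hin [hle hq]]]]]; first by left.
- case: (leP (teval v p) y) => hp.
    right; exists p; split; first by left.
    split => //; rewrite /= lexx /=.
    by apply: sub_all hall => q /= ->; rewrite orbT.
  by left; rewrite /= hp hall.
- case: (leP (teval v p) y) => hp.
    case: (leP (teval v p) (teval v p')) => hpp.
      right; exists p'; split; first by right.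
      by split => //; rewrite /= hpp hq.
    right; exists p; split; first by left.
    split => //; rewrite /= lexx /=.
    apply: sub_all hq => q /= /orP[hq|->]; last by rewrite orbT.
    by apply/orP; left; lra.
  right; exists p'; split; first by right.
  by split => //; rewrite /= hp orbT hq.
Qed.

Definition orbig (g : term -> formula) (l : seq term) :=
  foldr (fun p acc => FOr (g p) acc) FFalse l.

Lemma orbig_holds v g l : holds v (orbig g l) <-> exists p, List.In p l /\ holds v (g p).
Proof.
elim: l => [|p l IH] /=; first by split => // -[? []].
rewrite IH; split.
  by case=> [h|[q [hq h]]]; [exists p; split; [left|] | exists q; split; [right|]].
by case=> q [[<-|hq] h]; [left | right; exists q].
Qed.

Lemma all_In (T : Type) (c : pred T) l p : all c l -> List.In p l -> c p.
Proof. by elim: l => //= q l IH /andP[hq hl] [<-|/IH]; auto. Qed.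

Section FV2.
Variables (x : nat) (S : seq nat).

Lemma Pv_free l : x \notin l -> Pv x S l -> all (mem S) l.
Proof.
move=> hx /allP hp; apply/allP => n hn; have := hp n hn.
by have -> : n != x by apply: contraNneq hx => <-.
Qed.

Lemma pt_fv u s t : all (mem S) (tvars u) -> Pv x S (tvars s ++ tvars t) ->
  all (mem S) (fv (pt_eq x u s t)) && all (mem S) (fv (pt_lt x u s t)).
Proof.
move=> hu hp; rewrite /pt_eq /pt_lt; case E: lin => [[a r]|]; last first.
  by rewrite /= Pv_free // lin_none_vars.
have [_ _ hx hs] := lin_some (fun _ => 0) x s t a r 0 E.
by rewrite /= all_cat hu (free_sub _ _ _ _ hx hs hp).
Qed.

Lemma pl_fv u s t : all (mem S) (tvars u) -> Pv x S (tvars s ++ tvars t) ->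
  all (mem S) (fv (pl_eq x u s t)) && all (mem S) (fv (pl_lt x u s t)).
Proof.
move=> hu hp; rewrite /pl_eq /pl_lt; case E: lin => [[a r]|]; last first.
  by rewrite /= Pv_free // lin_none_vars.
have [_ _ hx hs] := lin_some (fun _ => 0) x s t a r 0 E.
have hr := free_sub _ _ _ _ hx hs hp.
by case: ifP; case: ifP => _ _; rewrite /= ?all_cat ?hu ?hr.
Qed.

Lemma mi_fv s t : Pv x S (tvars s ++ tvars t) ->
  all (mem S) (fv (mi_eq x s t)) && all (mem S) (fv (mi_lt x s t)).
Proof.
move=> hp; rewrite /mi_eq /mi_lt; case E: lin => [[a r]|]; last first.
  by rewrite /= Pv_free // lin_none_vars.
have [_ _ hx hs] := lin_some (fun _ => 0) x s t a r 0 E.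
have hr := free_sub _ _ _ _ hx hs hp.
by case: ifP => _; rewrite /= ?hr //; case: ifP.
Qed.

Lemma orbig_fv (c : pred term) g l : all c l ->
  (forall p, c p -> all (mem S) (fv (g p))) -> all (mem S) (fv (orbig g l)).
Proof.
move=> + H; elim: l => //= p l IH /andP[hp hl].
by rewrite all_cat H // IH.
Qed.
End FV2.

Lemma orbig_qf g l : (forall p, qf (g p)) -> qf (orbig g l).
Proof. by move=> H; elim: l => //= p l ->; rewrite H. Qed.

Definition psi x phi :=
  FOr (mapat (mi_eq x) (mi_lt x) phi)
      (orbig (fun u => FOr (mapat (pt_eq x u) (pt_lt x u) phi)
                           (mapat (pl_eq x u) (pl_lt x u) phi)) (bpts x phi)).

Theorem lemma1 (phi : formula) (x : nat) :
  qf phi ->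
  exists psi : formula,
    [/\ qf psi,
        {subset fv psi <= fv (FEx x phi)} &
        forall v : nat -> rat, holds v (FEx x phi) <-> holds v psi].
Proof.
move=> hq; exists (psi x phi).
set S := fv (FEx x phi).
have hP : Pv x S (fv phi).
  by apply/allP => n hn; apply/implyP => hnx; rewrite /S /= mem_filter hnx hn.
have hB := bpts_fv x S phi hP.
split.
- rewrite /psi /= mapat_qf; last first.
    by move=> s t; rewrite /mi_eq /mi_lt; case: lin => [[a r]|] //; do 2?case: ifP.
  apply: orbig_qf => u /=; rewrite !mapat_qf //.
    by move=> s t; rewrite /pl_eq /pl_lt; case: lin => [[a r]|] //; do 2?case: ifP.
  by move=> s t; rewrite /pt_eq /pt_lt; case: lin => [[a r]|].
- have H : all (mem S) (fv (psi x phi)).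
    rewrite /psi /= all_cat (mapat_fv _ _ _ _ _ (mi_fv x S) hP) /=.
    apply: (orbig_fv _ _ _ _ hB) => p /andP[_ hu] /=.
    rewrite all_cat (mapat_fv _ _ _ _ _ (fun s t => pt_fv x S p s t hu) hP).
    by rewrite (mapat_fv _ _ _ _ _ (fun s t => pl_fv x S p s t hu) hP).
  by move=> n hn; exact: (allP H n hn).
- move=> v; split.
  + case=> y Hy /=.
    case: (ex_max v y (bpts x phi)) => [hall|[p [hin [hle hq']]]].
      left; apply: (proj2 (mapat_holds _ _ v (upd v x y) _ x phi hq hall
                     (fun s t h => mi_ok v x s t y h))) Hy.
    right; apply/orbig_holds; exists p; split => //=.
    have /andP[hx _] := all_In _ _ _ _ hB hin.
    have [e|ne] := eqVneq (teval v p) y.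
      left; apply: (proj2 (mapat_holds _ _ v (upd v x (teval v p)) predT x phi hq
                     (all_predT _) (fun s t _ => pt_ok v x p s t hx))).
      by rewrite e.
    have hlt : teval v p < y by rewrite lt_neqAle ne hle.
    right; apply: (proj2 (mapat_holds _ _ v (upd v x y) _ x phi hq hq'
                     (fun s t h => pl_ok v x p s t y hlt h))) Hy.
  + case=> [h|/orbig_holds [p [hin [h|h]]]].
    * have [y hy] := ex_below v (bpts x phi); exists y.
      exact: (proj1 (mapat_holds _ _ v (upd v x y) _ x phi hq hy
                     (fun s t h => mi_ok v x s t y h))).
    * have /andP[hx _] := all_In _ _ _ _ hB hin.
      exists (teval v p).
      exact: (proj1 (mapat_holds _ _ v (upd v x (teval v p)) predT x phi hq
                     (all_predT _) (fun s t _ => pt_ok v x p s t hx))).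
    * have [y [hb hy]] := ex_above v (teval v p) (bpts x phi); exists y.
      exact: (proj1 (mapat_holds _ _ v (upd v x y) _ x phi hq hy
                     (fun s t h => pl_ok v x p s t y hb h))).
Qed.
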